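(* Let $k$ be an infinite field of characteristic $0$. (i) If $W_1=W(X_1,Y_1),W_2=W(X_2,Y_2)\in\Xi'$, $H\in\Xi$ and $(T_1,T_2)\in Cl_H(W_2)$, then $\mathcal{F}(\beta_{W_1,W_2}(T_1,T_2))=\beta_{\mathcal{F}(W_1),\mathcal{F}(W_2)}(T_1\oplus T_2)$. (ii) If $F_1=F(M_1),F_2=F(M_2)\in\mathrm{Ob}\,\Theta^0$, $(N,p)\in\Theta$ and $T\in Cl_N(F_2)$, then $\mathcal{F}^{-1}(\beta_{F_1,F_2}(T))=\beta_{\mathcal{F}^{-1}(F_1),\mathcal{F}^{-1}(F_2)}(T\cap\ker p,\,T\cap\mathrm{im}\,p)$, where $p$ here denotes the projection of $F_2$.
   Context: Representations $(L,V)$ (Lie algebra $L$ over $k$, $L$-module $V$) with homomorphisms $(\varphi,\psi)$ ($\varphi$ Lie homomorphism, $\psi$ linear, $\varphi(l)\circ\psi(v)=\psi(l\circ v)$) form $\Xi$. $W(X,Y)=(L(X),A(X)Y)$ is the free representation; $\Xi'$ is the set of $W(X,Y)$ with $X,Y$ finite subsets of fixed countable sets and $|X|=|Y|$. A Lie algebra with projection-derivation is a Lie algebra $M$ with linear $p$, $p^2=p$, $p[m_1,m_2]=[pm_1,m_2]+[m_1,pm_2]$; these form the variety $\Theta$, and $\Theta^0$ consists of its free algebras on finite subsets of a fixed countable set. The functor $\mathcal{F}$ sends $(L,V)$ to $(L\oplus V,p_V)$ ($[l_1+v_1,l_2+v_2]=[l_1,l_2]+l_1\circ v_2-l_2\circ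 v_1$, $p_V(l+v)=v$) and $(\varphi,\psi)$ to $\varphi\oplus\psi$; $\mathcal{F}^{-1}$ sends $(M,p)$ to $(\ker p,\mathrm{im}\,p)$ ($l\circ v=[l,v]$) and $f:(M_1,p_1)\to(M_2,p_2)$ to $(r_2f\kappa_1,p_2f\iota_1)$ with $r_2=\mathrm{id}-p_2$ and $\kappa_1,\iota_1$ inclusions; both are applied to pairs of morphisms componentwise. Closedness: for an algebra $H$, a free object $W$ and a subset $T$ of $W$ (a pair of subsets of the two sorts for representations), $T'_H$ is the set of homomorphisms $W\to H$ whose kernel contains $T$ (sortwise), $T''_H$ the (sortwise) intersection of their kernels, $T$ is $H$-closed if $T''_H=T$, and $Cl_H(W)$ is the set of $H$-closed subsets. For free objects $W_1,W_2$ and a congruence $T$ of $W_2$, $\beta_{W_1,W_2}(T)$ is the relation on $\mathrm{Hom}(W_1,W_2)$: two homomorphisms are related iff their values at every element of $W_1$ are congruent modulo $T$ (for representations: sortwise, the Lie parts modulo $T_1$ on $L(X_1)$ and the module parts modulo $T_2$ on $A(X_1)Y_1$). *)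

(* Defs.v *)
From HB Require Import structures.
From mathcomp Require Import all_boot all_algebra.
From mathcomp Require Import finmap.
Set Implicit Arguments.
Unset Strict Implicit.
Unset Printing Implicit Defensive.
Import GRing.Theory.
Local Open Scope ring_scope.

Section Defs.
Variable k : fieldType.

Definition lin (U V : lmodType k) (f : U -> V) : Prop :=
  forall (a : k) (x y : U), f (a *: x + y) = a *: f x + f y.

Lemma lin0 (U V : lmodType k) (f : U -> V) : lin f -> f 0 = 0.
Proof.
move=> H; have h := H 1 0 0; rewrite !scale1r addr0 in h.
by apply/esym/(addrI (f 0)); rewrite addr0 -h.
Qed.

Lemma linB (U V : lmodType k) (f : U -> V) x y : lin f -> f (y - x) = f y - f x.
Proof. by move=> H; rewrite -scaleN1r addrC H scaleN1r addrC. Qed.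

Definition lie_ax (L : lmodType k) (br : L -> L -> L) : Prop :=
  [/\ forall a, lin (br a), forall b, lin (fun x => br x b),
      forall x, br x x = 0 &
      forall x y z, br x (br y z) + br y (br z x) + br z (br x y) = 0].

Definition mod_ax (L V : lmodType k) (br : L -> L -> L) (act : L -> V -> V) : Prop :=
  [/\ forall l, lin (act l), forall v, lin (fun l => act l v) &
      forall a b v, act (br a b) v = act a (act b v) - act b (act a v)].

Record rep := Rep {
  rL : lmodType k; rbr : rL -> rL -> rL;
  rV : lmodType k; ract : rL -> rV -> rV;
  rep_lie : lie_ax rbr; rep_mod : mod_ax rbr ract }.

Definition rep_hom (L1 V1 L2 V2 : lmodType k)
  (br1 : L1 -> L1 -> L1) (act1 : L1 -> V1 -> V1)
  (br2 : L2 -> L2 -> L2) (act2 : L2 -> V2 -> V2)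
  (phi : L1 -> L2) (psi : V1 -> V2) : Prop :=
  [/\ lin phi, lin psi, forall a b, phi (br1 a b) = br2 (phi a) (phi b) &
      forall l v, act2 (phi l) (psi v) = psi (act1 l v)].

Definition rhom (W H : rep) := @rep_hom (rL W) (rV W) (rL H) (rV H)
  (@rbr W) (@ract W) (@rbr H) (@ract H).
Arguments rhom : clear implicits.

Definition free_rep (X Y : {fset nat}) (W : rep) (iX : X -> rL W) (iY : Y -> rV W) : Prop :=
  forall (H : rep) (f : X -> rL H) (g : Y -> rV H),
    (exists phi psi, rhom W H phi psi /\ (forall x, phi (iX x) = f x) /\
                                        (forall y, psi (iY y) = g y)) /\
    (forall phi psi phi' psi', rhom W H phi psi -> rhom W H phi' psi' ->
       (forall x, phi (iX x) = phi' (iX x)) -> (forall y, psi (iY y) = psi' (iY y)) ->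
       (forall l, phi l = phi' l) /\ (forall v, psi v = psi' v)).

Definition rep_primeH (L2 V2 LH VH : lmodType k)
  (br2 : L2 -> L2 -> L2) (act2 : L2 -> V2 -> V2)
  (brH : LH -> LH -> LH) (actH : LH -> VH -> VH)
  (T1 : L2 -> Prop) (T2 : V2 -> Prop) (phi : L2 -> LH) (psi : V2 -> VH) : Prop :=
  rep_hom br2 act2 brH actH phi psi /\
  (forall l, T1 l -> phi l = 0) /\ (forall v, T2 v -> psi v = 0).

Definition rep_closed (L2 V2 LH VH : lmodType k)
  (br2 : L2 -> L2 -> L2) (act2 : L2 -> V2 -> V2)
  (brH : LH -> LH -> LH) (actH : LH -> VH -> VH)
  (T1 : L2 -> Prop) (T2 : V2 -> Prop) : Prop :=
  (forall l, T1 l <-> forall phi psi,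
      rep_primeH br2 act2 brH actH T1 T2 phi psi -> phi l = 0) /\
  (forall v, T2 v <-> forall phi psi,
      rep_primeH br2 act2 brH actH T1 T2 phi psi -> psi v = 0).

Definition rep_beta (L1 V1 L2 V2 : lmodType k) (T1 : L2 -> Prop) (T2 : V2 -> Prop)
  (phi : L1 -> L2) (psi : V1 -> V2) (phi' : L1 -> L2) (psi' : V1 -> V2) : Prop :=
  (forall l, T1 (phi l - phi' l)) /\ (forall v, T2 (psi v - psi' v)).

Definition pd_ax (M : lmodType k) (br : M -> M -> M) (p : M -> M) : Prop :=
  [/\ lie_ax br, lin p, forall x, p (p x) = p x &
      forall a b, p (br a b) = br (p a) b + br a (p b)].

Record pd := PD { pM : lmodType k; pbr : pM -> pM -> pM; pp : pM -> pM;
                  pd_axP : pd_ax pbr pp }.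

Definition pd_hom (M1 M2 : lmodType k) (br1 : M1 -> M1 -> M1) (p1 : M1 -> M1)
  (br2 : M2 -> M2 -> M2) (p2 : M2 -> M2) (f : M1 -> M2) : Prop :=
  [/\ lin f, forall a b, f (br1 a b) = br2 (f a) (f b) & forall x, f (p1 x) = p2 (f x)].

Definition phom (F G : pd) := @pd_hom (pM F) (pM G) (@pbr F) (@pp F) (@pbr G) (@pp G).
Arguments phom : clear implicits.

Definition free_pd (X : {fset nat}) (F : pd) (iX : X -> pM F) : Prop :=
  forall (N : pd) (g : X -> pM N),
    (exists h, phom F N h /\ forall x, h (iX x) = g x) /\
    (forall h h', phom F N h -> phom F N h' -> (forall x, h (iX x) = h' (iX x)) ->
       forall m, h m = h' m).

Definition pd_primeH (M MH : lmodType k) (br : M -> M -> M) (p : M -> M)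
  (brH : MH -> MH -> MH) (pH : MH -> MH) (T : M -> Prop) (h : M -> MH) : Prop :=
  pd_hom br p brH pH h /\ (forall m, T m -> h m = 0).

Definition pd_closed (M MH : lmodType k) (br : M -> M -> M) (p : M -> M)
  (brH : MH -> MH -> MH) (pH : MH -> MH) (T : M -> Prop) : Prop :=
  forall m, T m <-> forall h, pd_primeH br p brH pH T h -> h m = 0.

Definition pd_beta (M1 M2 : lmodType k) (T : M2 -> Prop) (f g : M1 -> M2) : Prop :=
  forall m, T (f m - g m).

(* The functor F on objects: (L + V, p_V) *)
Definition Fbr (W : rep) (x y : rL W * rV W) : rL W * rV W :=
  (rbr x.1 y.1, ract x.1 y.2 - ract y.1 x.2).
Definition Fp (W : rep) (x : rL W * rV W) : rL W * rV W := (0, x.2).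
(* ... and on morphisms: phi (+) psi *)
Definition Fmor (L1 V1 L2 V2 : Type) (phi : L1 -> L2) (psi : V1 -> V2)
  (x : L1 * V1) : L2 * V2 := (phi x.1, psi x.2).
Definition Tsum (L V : Type) (T1 : L -> Prop) (T2 : V -> Prop) (x : L * V) : Prop :=
  T1 x.1 /\ T2 x.2.

(* The functor F^{-1}: (M,p) |-> (ker p, im p) *)
Section Finv.
Variable F : pd.
Let M := pM F.
Let br := @pbr F.
Let p := @pp F.

Lemma pd_lie : lie_ax br. Proof. by case: (pd_axP F). Qed.
Lemma pd_lin : lin p. Proof. by case: (pd_axP F). Qed.
Lemma pd_idem x : p (p x) = p x. Proof. by case: (pd_axP F). Qed.
Lemma pd_der a b : p (br a b) = br (p a) b + br a (p b). Proof. by case: (pd_axP F). Qed.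

Definition kerp : {pred M} := [pred x | p x == 0].
(* im p, written as the fixed points of the idempotent p *)
Definition imp : {pred M} := [pred x | p x == x].

Lemma kerp_closed : GRing.subsemimod_closed kerp.
Proof.
split; [split|].
- by rewrite inE (lin0 pd_lin).
- move=> x y; rewrite !inE => /eqP hx /eqP hy.
  by have := pd_lin 1 x y; rewrite !scale1r hx hy addr0 => ->.
- move=> a x; rewrite !inE => /eqP hx.
  by have := pd_lin a x 0; rewrite !addr0 (lin0 pd_lin) hx scaler0 addr0 => ->.
Qed.

Lemma imp_closed : GRing.subsemimod_closed imp.
Proof.
split; [split|].
- by rewrite inE (lin0 pd_lin).
- move=> x y; rewrite !inE => /eqP hx /eqP hy.
  by have := pd_lin 1 x y; rewrite !scale1r hx hy => ->.
- move=> a x; rewrite !inE => /eqP hx.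
  by have := pd_lin a x 0; rewrite !addr0 (lin0 pd_lin) hx addr0 => ->.
Qed.

HB.instance Definition _ := GRing.isSubmodClosed.Build k M kerp kerp_closed.
HB.instance Definition _ := GRing.isSubmodClosed.Build k M imp imp_closed.

Record kerT := KerT { kval :> M; kvalP : kval \in kerp }.
HB.instance Definition _ := [isSub for kval].
HB.instance Definition _ := [Choice of kerT by <:].
HB.instance Definition _ := [SubChoice_isSubLmodule of kerT by <:].

Record imT := ImT { ival :> M; ivalP : ival \in imp }.
HB.instance Definition _ := [isSub for ival].
HB.instance Definition _ := [Choice of imT by <:].
HB.instance Definition _ := [SubChoice_isSubLmodule of imT by <:].

Lemma br0l b : br 0 b = 0.
Proof. by case: pd_lie => _ H _ _; exact: (lin0 (H b)). Qed.
Lemma br0r a : br a 0 = 0.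
Proof. by case: pd_lie => H _ _ _; exact: (lin0 (H a)). Qed.

Lemma kbr_subproof (a b : kerT) : br a b \in kerp.
Proof.
have /eqP ha := kvalP a; have /eqP hb := kvalP b.
by rewrite inE pd_der ha hb br0l br0r addr0.
Qed.
Definition kbr (a b : kerT) : kerT := KerT (kbr_subproof a b).

Lemma kact_subproof (l : kerT) (v : imT) : br l v \in imp.
Proof.
have /eqP hl := kvalP l; have /eqP hv := ivalP v.
by rewrite inE pd_der hl hv br0l add0r.
Qed.
Definition kact (l : kerT) (v : imT) : imT := ImT (kact_subproof l v).
End Finv.

Section FinvMor.
Variables F1 F2 : pd.
Lemma FinvL_subproof (f : pM F1 -> pM F2) (x : kerT F1) :
  f x - pp (f x) \in @kerp F2.
Proof. by rewrite inE linB ?pd_idem ?subrr //; apply: pd_lin. Qed.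
Definition FinvL (f : pM F1 -> pM F2) (x : kerT F1) : kerT F2 :=
  KerT (FinvL_subproof f x).
Lemma FinvV_subproof (f : pM F1 -> pM F2) (v : imT F1) : pp (f v) \in @imp F2.
Proof. by rewrite inE pd_idem. Qed.
Definition FinvV (f : pM F1 -> pM F2) (v : imT F1) : imT F2 :=
  ImT (FinvV_subproof f v).
End FinvMor.

End Defs.
Arguments rhom {k} W H phi psi.
Arguments phom {k} F G f.

(* Main.v *)
Require Import Defs.
From HB Require Import structures.
From mathcomp Require Import all_boot all_algebra.
From mathcomp Require Import finmap.
From Stdlib Require Import FunctionalExtensionality.
Local Open Scope ring_scope.
Import GRing.Theory.
Set Implicit Arguments. Unset Strict Implicit.

Section Lin.
Variable k : fieldType.
Lemma linD (U V : lmodType k) (f : U -> V) x y : lin f -> f (x + y) = f x + f y.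
Proof. by move=> H; have := H 1 x y; rewrite !scale1r. Qed.
Lemma linZ (U V : lmodType k) (f : U -> V) a x : lin f -> f (a *: x) = a *: f x.
Proof. by move=> H; have := H a x 0; rewrite !addr0 (lin0 H) addr0. Qed.
Lemma linN (U V : lmodType k) (f : U -> V) x : lin f -> f (- x) = - f x.
Proof. by move=> H; rewrite -sub0r linB // (lin0 H) sub0r. Qed.
End Lin.

Section PD.
Variable k : fieldType.
Hypothesis two : (2%:R : k) != 0.
Variable F : pd k.
Local Notation br := (@pbr k F).
Local Notation p := (@pp k F).

Lemma brlr a : lin (br a). Proof. by case: (pd_lie F). Qed.
Lemma brll b : lin (fun x => br x b). Proof. by case: (pd_lie F). Qed.
Lemma brDr a x y : br a (x + y) = br a x + br a y. Proof. exact: linD (brlr a). Qed.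
Lemma brDl b x y : br (x + y) b = br x b + br y b. Proof. exact: (@linD k _ _ (fun x => br x b) x y (brll b)). Qed.
Lemma brC a b : br a b = - br b a.
Proof.
case: (pd_lie F) => _ _ hxx _.
have := hxx (a + b); rewrite brDl !brDr !hxx add0r addr0 => /eqP.
by rewrite addr_eq0 => /eqP.
Qed.
Lemma pD x y : p (x + y) = p x + p y. Proof. exact: (@linD k _ _ p x y (@pd_lin k F)). Qed.
Lemma pB x y : p (x - y) = p x - p y. Proof. exact: (@linB k _ _ p y x (@pd_lin k F)). Qed.

Lemma double0 (x : pM F) : x + x = 0 -> x = 0.
Proof.
move=> h; have : (2%:R : k) *: x = 0 by rewrite scaler_nat mulr2n.
by move/eqP; rewrite scaler_eq0 (negbTE two) => /eqP.
Qed.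

Lemma br_imim (v w : pM F) : p v = v -> p w = w -> br v w = 0.
Proof.
move=> hv hw; have e : p (br v w) = br v w + br v w by rewrite pd_der hv hw.
have e2 : p (br v w) = 0.
  have h : p (br v w) + p (br v w) = p (br v w) by rewrite -pD -e pd_idem.
  by apply: (addrI (p (br v w))); rewrite addr0.
by apply: double0; rewrite -e.
Qed.

Lemma kpart_subproof (m : pM F) : m - p m \in @kerp k F.
Proof. by rewrite inE pB pd_idem subrr. Qed.
Definition kpart m : kerT F := KerT (kpart_subproof m).
Lemma ipart_subproof (m : pM F) : p m \in @imp k F.
Proof. by rewrite inE pd_idem. Qed.
Definition ipart m : imT F := ImT (ipart_subproof m).

Lemma decomp m : m = kval (kpart m) + ival (ipart m).
Proof. by rewrite /= subrK. Qed.
Lemma kerE (x : kerT F) : p (kval x) = 0. Proof. by apply/eqP; exact: kvalP. Qed.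
Lemma imE (x : imT F) : p (ival x) = ival x. Proof. by apply/eqP; exact: ivalP. Qed.
Lemma kpartK (x : kerT F) : kpart (kval x) = x.
Proof. by apply: val_inj; rewrite /= kerE subr0. Qed.
Lemma ipartK0 (x : kerT F) : ipart (kval x) = 0.
Proof. by apply: val_inj; rewrite /= kerE. Qed.
Lemma ipartK (x : imT F) : ipart (ival x) = x.
Proof. by apply: val_inj; rewrite /= imE. Qed.
Lemma kpartI0 (x : imT F) : kpart (ival x) = 0.
Proof. by apply: val_inj; rewrite /= imE subrr. Qed.
Lemma kpart_lin : lin kpart.
Proof.
move=> a x y; apply: val_inj => /=.
rewrite (@pd_lin k F) scalerBr opprD addrACA //.
Qed.
Lemma ipart_lin : lin ipart.
Proof. by move=> a x y; apply: val_inj => /=; rewrite (@pd_lin k F). Qed.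
End PD.

Section Part2.
Variable k : fieldType.
Hypothesis two : (2%:R : k) != 0.
Variables F1 F2 : pd k.

Lemma kvalE (F : pd k) a (x y : kerT F) : kval (a *: x + y) = a *: kval x + kval y.
Proof. by []. Qed.
Lemma ivalE (F : pd k) a (x y : imT F) : ival (a *: x + y) = a *: ival x + ival y.
Proof. by []. Qed.
Lemma kvalB (F : pd k) (x y : kerT F) : kval (x - y) = kval x - kval y.
Proof. by []. Qed.
Lemma ivalB (F : pd k) (x y : imT F) : ival (x - y) = ival x - ival y.
Proof. by []. Qed.
Lemma kval0 (F : pd k) : kval (0 : kerT F) = 0. Proof. by []. Qed.
Lemma ival0 (F : pd k) : ival (0 : imT F) = 0. Proof. by []. Qed.

Section Fwd.
Variable f : pM F1 -> pM F2.
Hypothesis hf : phom F1 F2 f.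

Lemma kv x : kval (FinvL f x) = f (kval x).
Proof.
case: hf => hl _ hp; rewrite /= -hp kerE (lin0 hl) subr0 //.
Qed.
Lemma iv v : ival (FinvV f v) = f (ival v).
Proof. by case: hf => _ _ hp; rewrite /= -hp imE. Qed.

Lemma fwd2 : rep_hom (@kbr _ F1) (@kact _ F1) (@kbr _ F2) (@kact _ F2) (FinvL f) (FinvV f).
Proof.
case: hf => hl hbr hp; split.
- move=> a x y; apply: val_inj.
  change (kval (FinvL f (a *: x + y)) = kval (a *: FinvL f x + FinvL f y)).
  by rewrite kvalE !kv kvalE hl.
- move=> a x y; apply: val_inj.
  change (ival (FinvV f (a *: x + y)) = ival (a *: FinvV f x + FinvV f y)).
  by rewrite ivalE !iv ivalE hl.
- move=> a b; apply: val_inj.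
  change (kval (FinvL f (kbr a b)) = pbr (kval (FinvL f a)) (kval (FinvL f b))).
  by rewrite !kv /= hbr.
- move=> l v; apply: val_inj.
  change (pbr (kval (FinvL f l)) (ival (FinvV f v)) = ival (FinvV f (kact l v))).
  by rewrite iv kv iv /= hbr.
Qed.
End Fwd.

Section Bwd.
Variables (phi : kerT F1 -> kerT F2) (psi : imT F1 -> imT F2).
Hypothesis hr : rep_hom (@kbr _ F1) (@kact _ F1) (@kbr _ F2) (@kact _ F2) phi psi.

Definition glue (m : pM F1) : pM F2 := kval (phi (kpart m)) + ival (psi (ipart m)).

Lemma lphi : lin phi. Proof. by case: hr. Qed.
Lemma lpsi : lin psi. Proof. by case: hr. Qed.

Lemma glueK x : glue (kval x) = kval (phi x).
Proof. by rewrite /glue kpartK ipartK0 (lin0 lpsi) ival0 addr0. Qed.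
Lemma glueI v : glue (ival v) = ival (psi v).
Proof. by rewrite /glue ipartK kpartI0 (lin0 lphi) kval0 add0r. Qed.

Lemma glue_lin : lin glue.
Proof.
move=> a x y; rewrite /glue kpart_lin ipart_lin lphi lpsi kvalE ivalE.
by rewrite scalerDr addrACA.
Qed.
Lemma glueD x y : glue (x + y) = glue x + glue y. Proof. exact: linD glue_lin. Qed.
Lemma glueN x : glue (- x) = - glue x. Proof. exact: linN glue_lin. Qed.

Lemma glue_p x : glue (pp x) = pp (glue x).
Proof.
rewrite {2}/glue pD kerE imE add0r.
have -> : pp x = ival (ipart x) by [].
by rewrite glueI.
Qed.

Lemma glue_br4 (a0 b0 : kerT F1) (a1 b1 : imT F1) :
  glue (pbr (kval a0 + ival a1) (kval b0 + ival b1)) =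
  pbr (kval (phi a0) + ival (psi a1)) (kval (phi b0) + ival (psi b1)).
Proof.
case: hr => _ _ hbr hact.
rewrite !brDl !brDr !glueD.
have -> : pbr (kval a0) (kval b0) = kval (kbr a0 b0) by [].
have -> : pbr (kval a0) (ival b1) = ival (kact a0 b1) by [].
rewrite (brC (ival a1)) glueN.
have -> : pbr (kval b0) (ival a1) = ival (kact b0 a1) by [].
rewrite (brC (ival (psi a1))).
rewrite glueK !glueI hbr -!hact.
rewrite (br_imim two (imE a1) (imE b1)) (br_imim two (imE (psi a1)) (imE (psi b1))).
by rewrite (lin0 glue_lin).
Qed.

Lemma glue_br a b : glue (pbr a b) = pbr (glue a) (glue b).
Proof. by rewrite {1}(decomp a) {1}(decomp b) glue_br4. Qed.

Lemma phom_glue : phom F1 F2 glue.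
Proof. split; [exact: glue_lin | exact: glue_br | exact: glue_p]. Qed.

Lemma FinvL_glue : FinvL glue = phi.
Proof.
apply: functional_extensionality => x; apply: val_inj.
change (kval (FinvL glue x) = kval (phi x)).
by rewrite (kv phom_glue) glueK.
Qed.
Lemma FinvV_glue : FinvV glue = psi.
Proof.
apply: functional_extensionality => x; apply: val_inj.
change (ival (FinvV glue x) = ival (psi x)).
by rewrite (iv phom_glue) glueI.
Qed.
End Bwd.
End Part2.

Lemma two_ne0 (k : fieldType) : [pchar k] =i pred0 -> (2%:R : k) != 0.
Proof. move=> h; have := h 2; by rewrite !inE /= => ->. Qed.

Section Part1b.
Variable k : fieldType.
Lemma pairE (L V : lmodType k) a (x y : L * V) : a *: x + y = (a *: x.1 + y.1, a *: x.2 + y.2).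
Proof. by []. Qed.
Variables W1 W2 : rep k.

Lemma act0r (W : rep k) l : ract l (0 : rV W) = 0.
Proof. by case: (rep_mod W) => H _ _; exact: lin0 (H l). Qed.
Lemma act0l (W : rep k) v : ract (0 : rL W) v = 0.
Proof. by case: (rep_mod W) => _ H _; exact: lin0 (H v). Qed.
Lemma rbr0r (W : rep k) l : rbr l (0 : rL W) = 0.
Proof. by case: (rep_lie W) => H _ _ _; exact: lin0 (H l). Qed.

Lemma fwd1 phi psi : rhom W1 W2 phi psi ->
  pd_hom (@Fbr _ W1) (@Fp _ W1) (@Fbr _ W2) (@Fp _ W2) (Fmor phi psi).
Proof.
case=> lphi lpsi hbr hact; split.
- by move=> a [x1 x2] [y1 y2]; rewrite /Fmor /=; congr pair; [apply: lphi|apply: lpsi].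
- by move=> [a1 a2] [b1 b2]; rewrite /Fmor /Fbr /=; congr pair;
    [apply: hbr | rewrite linB // !hact].
- by move=> [x1 x2]; rewrite /Fmor /Fp /=; congr pair; exact: lin0.
Qed.

Lemma bwd1 f : pd_hom (@Fbr _ W1) (@Fp _ W1) (@Fbr _ W2) (@Fp _ W2) f ->
  rhom W1 W2 (fun l => (f (l, 0)).1) (fun v => (f (0, v)).2) /\
  f = Fmor (fun l => (f (l, 0)).1) (fun v => (f (0, v)).2).
Proof.
case=> hl hbr hp.
set phi := fun l => _; set psi := fun v => _.
have f0 : f (0, 0) = 0 by exact: (lin0 hl).
have fE : forall l v, f (l, v) = (phi l, psi v).
  move=> l v.
  have e1 := hp (l, 0); rewrite /Fp /= f0 in e1.
  have e2 := hp (0, v); rewrite /Fp /= in e2.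
  have := hl 1 (l, 0) (0, v); rewrite pairE /= !scale1r addr0 add0r => ->.
  rewrite e2 /phi /psi /=.
  case: (f (l, 0)) e1 => a b [] <- /=.
  by apply: injective_projections => /=; rewrite ?addr0 ?add0r.
have lphi : lin phi.
  by move=> a x y; have := hl a (x, 0) (y, 0); rewrite pairE /= scaler0 addr0 !fE pairE /= => -[].
have lpsi : lin psi.
  by move=> a x y; have := hl a (0, x) (0, y); rewrite pairE /= scaler0 addr0 !fE pairE /= => -[].
split; last by apply: functional_extensionality => -[l v]; rewrite fE.
split => //.
- move=> a b; have := hbr (a, 0) (b, 0); rewrite /Fbr /= !fE => -[] -> _ //.
- move=> l v; have := hbr (l, 0) (0, v); rewrite /Fbr /= !fE /=.
  by rewrite !act0l (lin0 lphi) act0l !subr0 => -[].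
Qed.

End Part1b.

Local Open Scope fset_scope.
Theorem proposition8 (k : fieldType)
  (char0 : [pchar k] =i pred0)
  (k_infinite : forall s : seq k, exists x : k, x \notin s) :
  (* (i) *)
  (forall (X1 Y1 X2 Y2 : {fset nat}),
     #|` X1| = #|` Y1| -> #|` X2| = #|` Y2| ->
   forall (W1 W2 : rep k) (iX1 : X1 -> rL W1) (iY1 : Y1 -> rV W1)
          (iX2 : X2 -> rL W2) (iY2 : Y2 -> rV W2),
   free_rep iX1 iY1 -> free_rep iX2 iY2 ->
   forall (H : rep k) (T1 : rL W2 -> Prop) (T2 : rV W2 -> Prop),
   rep_closed (@rbr _ W2) (@ract _ W2) (@rbr _ H) (@ract _ H) T1 T2 ->
   forall f g : rL W1 * rV W1 -> rL W2 * rV W2,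
     (exists phi psi phi' psi',
        rhom W1 W2 phi psi /\ rhom W1 W2 phi' psi' /\
        rep_beta T1 T2 phi psi phi' psi' /\
        f = Fmor phi psi /\ g = Fmor phi' psi')
     <->
     (pd_hom (@Fbr _ W1) (@Fp _ W1) (@Fbr _ W2) (@Fp _ W2) f /\
      pd_hom (@Fbr _ W1) (@Fp _ W1) (@Fbr _ W2) (@Fp _ W2) g /\
      pd_beta (Tsum T1 T2) f g))
  /\
  (* (ii) *)
  (forall (M1 M2 : {fset nat}) (F1 F2 : pd k)
          (iM1 : M1 -> pM F1) (iM2 : M2 -> pM F2),
   free_pd iM1 -> free_pd iM2 ->
   forall (N : pd k) (T : pM F2 -> Prop),
   pd_closed (@pbr _ F2) (@pp _ F2) (@pbr _ N) (@pp _ N) T ->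
   forall (phi phi' : kerT F1 -> kerT F2) (psi psi' : imT F1 -> imT F2),
     (exists f g, phom F1 F2 f /\ phom F1 F2 g /\ pd_beta T f g /\
        phi = FinvL f /\ psi = FinvV f /\ phi' = FinvL g /\ psi' = FinvV g)
     <->
     (rep_hom (@kbr _ F1) (@kact _ F1) (@kbr _ F2) (@kact _ F2) phi psi /\
      rep_hom (@kbr _ F1) (@kact _ F1) (@kbr _ F2) (@kact _ F2) phi' psi' /\
      rep_beta (fun x : kerT F2 => T (kval x)) (fun v : imT F2 => T (ival v))
               phi psi phi' psi')).

Proof.
have two := two_ne0 char0.
split.
- move=> X1 Y1 X2 Y2 _ _ W1 W2 iX1 iY1 iX2 iY2 _ _ H T1 T2 _ f g; split.
  + move=> [phi [psi [phi' [psi' [hf [hg [[b1 b2] [-> ->]]]]]]]].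
    split; first exact: fwd1.
    split; first exact: fwd1.
    by move=> [l v]; split; [exact: b1 | exact: b2].
  + move=> [hf [hg hb]].
    have [rf ef] := bwd1 hf; have [rg eg] := bwd1 hg.
    do 4 eexists; split; first exact: rf.
    split; first exact: rg.
    split; last by split; [exact: ef | exact: eg].
    split => x.
    * by have [] := hb (x, 0).
    * by have [] := hb (0, x).
- move=> M1 M2 F1 F2 iM1 iM2 _ _ N T hT phi phi' psi psi'.
  have Tadd : forall a b, T a -> T b -> T (a + b)%R.
    move=> a b ha hb; apply/hT => h hh.
    case: (hh) => -[hl _ _] _.
    by rewrite (linD _ _ hl) (proj1 (hT a) ha h hh) (proj1 (hT b) hb h hh) addr0.
  split.
  + move=> [f [g [hf [hg [hb [-> [-> [-> ->]]]]]]]].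
    split; first exact: fwd2.
    split; first exact: fwd2.
    split => x.
    * by rewrite kvalB !kv.
    * by rewrite ivalB !iv.
  + move=> [h1 [h2 [b1 b2]]].
    exists (glue phi psi), (glue phi' psi').
    split; first exact: phom_glue.
    split; first exact: phom_glue.
    split; last by rewrite (FinvL_glue two h1) (FinvV_glue two h1) (FinvL_glue two h2) (FinvV_glue two h2).
    move=> m; rewrite /glue opprD addrACA -kvalB -ivalB.
    exact: Tadd.
Qed.
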